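(* Let $k\ge\ell\ge 2$ be integers with $k+\ell\ge6$, let $G$ be a finite digraph, let $Z\subseteq V(G)$ with $|Z|\ge2$, and let $v\in V(G)\setminus Z$. Then $$\Pr[\phi\in\mathcal S \text{ and } \phi(I\cup O)\subseteq Z\mid \phi(c)=v]\le(1-\delta(Z))\,(\mu(Z)-\rho^-_Z(v))^k(\rho^-_Z(v))^\ell\le(1-\delta(Z))\,\lambda_0\,\mu(Z)^m.$$
   Context: Put $m=k+\ell$ and $\lambda_0=k^k\ell^\ell/m^m$. Digraphs are finite, without loops; $xy$ denotes an arc from $x$ to $y$; two vertices are adjacent if at least one of $xy,yx$ is an arc. The oriented star $S_{k,\ell}$ has a center $c$, a set $O$ of $k$ out-leaves and a set $I$ of $\ell$ in-leaves; its arcs are exactly $co$ ($o\in O$) and $ic$ ($i\in I$). For a digraph $G$ on $n$ vertices, let $\phi$ be a uniformly random map from $V(S_{k,\ell})$ to $V(G)$ (all $n^{m+1}$ maps equally likely), and let $\mathcal S$ be the set of maps $\phi$ that are isomorphisms from $S_{k,\ell}$ onto the induced subdigraph $G[\mathrm{Im}\,\phi]$ (in particular injective). For $A\subseteq V(G)$: $\mu(A)=|A|/n$; $N^-_A(x)$ is the set of in-neighbours of $x$ lying in $A$, and $\rho^-_A(x)=|N^-_A(x)|/n$. For $Z\subseteq V(G)$ with $|Z|\ge2$, $\delta(Z)$ is the number of adjacent unordered pairs of vertices of $Z$ divided by $\binom{|Z|}{2}$. *)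

(* Defs.v *)
From mathcomp Require Import all_boot all_order all_algebra.
Set Implicit Arguments. Unset Strict Implicit. Unset Printing Implicit Defensive.
Import Order.TTheory GRing.Theory Num.Theory.
Local Open Scope ring_scope.

(* Vertices of the oriented star S_{k,l}: None = centre c,
   Some (inl o) = out-leaf o (o < k), Some (inr i) = in-leaf i (i < l). *)
Definition starV (k l : nat) := option ('I_k + 'I_l)%type.

Definition star_arc (k l : nat) (x y : starV k l) : bool :=
  match x, y with
  | None, Some (inl _) => true
  | Some (inr _), None => true
  | _, _ => false
  end.

(* phi is an isomorphism from S_{k,l} onto the induced subdigraph G[Im phi]
   (G given by its arc relation [arc]). *)
Definition star_iso (V : finType) (arc : rel V) (k l : nat)
  (phi : {ffun starV k l -> V}) : bool :=
  injectiveb phi &&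
  [forall x, forall y, star_arc x y == arc (phi x) (phi y)].

(* Pr[phi in S and phi(I u O) subset Z | phi(c) = v], phi uniform among all maps. *)
Definition cond_prob (R : realFieldType) (V : finType) (arc : rel V) (k l : nat)
  (Z : {set V}) (v : V) : R :=
  (#|[set phi : {ffun starV k l -> V} |
       [&& phi None == v, star_iso arc phi &
           [forall x : ('I_k + 'I_l)%type, phi (Some x) \in Z]]]|%:R)
  / (#|[set phi : {ffun starV k l -> V} | phi None == v]|%:R).

Definition mu (R : realFieldType) (V : finType) (A : {set V}) : R :=
  #|A|%:R / #|V|%:R.

Definition rho_in (R : realFieldType) (V : finType) (arc : rel V)
  (A : {set V}) (x : V) : R :=
  #|[set y in A | arc y x]|%:R / #|V|%:R.

Definition delta (R : realFieldType) (V : finType) (arc : rel V) (Z : {set V}) : R :=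
  #|[set e : {set V} | [&& e \subset Z, #|e| == 2 &
        [exists x in e, exists y in e, (x != y) && (arc x y || arc y x)]]]|%:R
  / ('C(#|Z|, 2))%:R.

Definition lambda0 (R : realFieldType) (k l : nat) : R :=
  (k%:R ^+ k * l%:R ^+ l) / ((k + l)%:R ^+ (k + l)).

(* Main.v *)
Require Import Defs.
From mathcomp Require Import all_boot all_order all_algebra.
From mathcomp Require Import ring lra zify.
Set Implicit Arguments. Unset Strict Implicit. Unset Printing Implicit Defensive.
Import Order.TTheory GRing.Theory Num.Theory.
Lemma card_fam (X V : finType) (F : X -> {set V}) :
  #|[set f : {ffun X -> V} | [forall x, f x \in F x]]| = \prod_x #|F x|.
Proof.
have := card_family (fun x => mem (F x)).
have -> : foldr muln 1 [seq #|mem (F x)| | x : X] = \prod_x #|F x|.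
  transitivity (\prod_(j <- [seq #|F x| | x <- enum X]) j).
    rewrite /image_mem. elim: (enum X) => [|a s IH]; first by rewrite big_nil.
    by rewrite /= big_cons IH.
  by rewrite big_map big_enum.
move=> <-. rewrite cardsE; apply: eq_card => f; rewrite !inE. by [].
Qed.

Lemma prod2 (X : finType) (g : X -> nat) (a b : X) : a != b ->
  \prod_x g x = g a * g b * \prod_(x | (x != a) && (x != b)) g x.
Proof.
move=> ab; rewrite (bigD1 a) //= (bigD1 b) /=; last by rewrite eq_sym.
by rewrite mulnA.
Qed.
Lemma card_fam_pair (X V : finType) (F : X -> {set V}) (a b : X) (P : {set V * V}) :
  a != b -> P \subset setX (F a) (F b) ->
  #|[set f : {ffun X -> V} | [forall x, f x \in F x] && ((f a, f b) \in P)]|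
    * (#|F a| * #|F b|) = #|P| * \prod_x #|F x|.
Proof.
move=> ab PF.
set S := [set f : {ffun X -> V} | _].
pose Fp (p : V * V) x := if x == a then [set p.1] else if x == b then [set p.2] else F x.
have Hp : forall p, p \in P -> \sum_(f in S | (f a, f b) == p) 1 = \prod_x #|Fp p x|.
  move=> p pP; rewrite -card_fam -sum1_card; apply: eq_bigl => f; rewrite !inE.
  have /andP [p1a p2b] : (p.1 \in F a) && (p.2 \in F b) by have := subsetP PF p pP; rewrite inE.
  apply/andP/forallP => [[/andP [/forallP Hf _] /eqP fp] x | H].
    rewrite /Fp; case: eqP => [->|xa]; first by rewrite inE -fp.
    by case: eqP => [->|xb]; [rewrite inE -fp | exact: Hf].
  have fa : f a = p.1 by have := H a; rewrite /Fp eqxx inE => /eqP.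
  have fb : f b = p.2 by have := H b; rewrite /Fp eq_sym (negbTE ab) eqxx inE => /eqP.
  have fp : (f a, f b) = p by rewrite fa fb; case: p {pP p1a p2b fa fb H}.
  rewrite fp pP eqxx !andbT; split => //; apply/forallP => x.
  have := H x; rewrite /Fp; case: eqP => [->|xa]; first by rewrite inE => /eqP ->.
  by case: eqP => [->|xb] //; rewrite inE => /eqP ->.
have Hc : forall p, p \in P -> \prod_x #|Fp p x| * (#|F a| * #|F b|) = \prod_x #|F x|.
  move=> p pP; rewrite (prod2 _ ab) [in RHS](prod2 _ ab).
  rewrite /Fp eqxx eq_sym (negbTE ab) eqxx !cards1 !mul1n.
  rewrite [in LHS](eq_bigr (fun x => #|F x|)); first by rewrite mulnC.
  by move=> x /andP [xa xb]; rewrite (negbTE xa) (negbTE xb).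
rewrite -sum1_card (partition_big (fun f : {ffun X -> V} => (f a, f b)) (mem P)) /=; last first.
  by move=> f; rewrite inE => /andP [].
rewrite big_distrl /= (eq_bigr (fun _ => \prod_x #|F x|)) ?sum_nat_const // => p pP.
by rewrite Hp // Hc.
Qed.
Lemma big_opt (T : finType) (g : option T -> nat) :
  \prod_x g x = g None * \prod_t g (Some t).
Proof.
by rewrite ![index_enum _]unlock [@Finite.enum in LHS]unlock /= big_cons big_map.
Qed.

Definition cnt (V : finType) (Q : pred (V * V)) (X Y : {set V}) :=
  #|[set p in setX X Y | Q p]|.

Lemma cntUl (V : finType) Q (X1 X2 Y : {set V}) : [disjoint X1 & X2] ->
  cnt Q (X1 :|: X2) Y = cnt Q X1 Y + cnt Q X2 Y.
Proof.
move=> dis; rewrite /cnt -[RHS]subn0 -(cards0 (V * V)%type).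
have <- : [set p in setX X1 Y | Q p] :&: [set p in setX X2 Y | Q p] = set0.
  apply/setP => p; rewrite !inE.
  case: (boolP (p.1 \in X1)) => //= h1; case: (boolP (p.1 \in X2)) => //= h2.
  by have := disjointFr dis h1; rewrite h2.
  by rewrite andbF.
rewrite -cardsU; apply: eq_card => p; rewrite !inE.
by case: (p.1 \in X1); case: (p.1 \in X2); case: (p.2 \in Y); case: (Q p).
Qed.

Lemma cntUr (V : finType) Q (X Y1 Y2 : {set V}) : [disjoint Y1 & Y2] ->
  cnt Q X (Y1 :|: Y2) = cnt Q X Y1 + cnt Q X Y2.
Proof.
move=> dis; rewrite /cnt -[RHS]subn0 -(cards0 (V * V)%type).
have <- : [set p in setX X Y1 | Q p] :&: [set p in setX X Y2 | Q p] = set0.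
  apply/setP => p; rewrite !inE.
  case: (boolP (p.2 \in Y1)) => /=; rewrite ?andbF //= => h1; case: (boolP (p.2 \in Y2)) => /= h2; rewrite ?andbF //=.
  by have := disjointFr dis h1; rewrite h2.
rewrite -cardsU; apply: eq_card => p; rewrite !inE.
by case: (p.1 \in X); case: (p.2 \in Y1); case: (p.2 \in Y2); case: (Q p).
Qed.

Lemma cnt_split (V : finType) Q (X Y : {set V}) :
  cnt Q X Y + cnt (predC Q) X Y = #|X| * #|Y|.
Proof.
rewrite -cardsX -(cardsID [set p | Q p] (setX X Y)) /cnt; congr (_ + _); apply: eq_card => p; rewrite !inE /=; [by rewrite andbC | by rewrite andbC].
Qed.

Lemma edges2 (V : finType) (arc : rel V) (Z : {set V}) :
  2 * #|[set e : {set V} | [&& e \subset Z, #|e| == 2 &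
        [exists x in e, exists y in e, (x != y) && (arc x y || arc y x)]]]|
  <= cnt (fun p => (p.1 != p.2) && (arc p.1 p.2 || arc p.2 p.1)) Z Z.
Proof.
set Es := [set e : {set V} | _].
rewrite /cnt -[#|[set p in _ | _]|]sum1_card.
rewrite (partition_big (fun p : V * V => [set p.1; p.2]) (mem Es)) /=; last first.
  move=> [x y]; rewrite !inE /= => /andP [/andP [xZ yZ] /andP [xy axy]].
  rewrite cards2 xy /=; apply/andP; split.
    by apply/subsetP => u; rewrite !inE => /orP [] /eqP ->.
  apply/existsP; exists x; rewrite !inE eqxx /=; apply/existsP; exists y.
  by rewrite !inE eqxx orbT xy axy.
rewrite mulnC -sum_nat_const; apply: leq_sum => e; rewrite inE => /and3P [eZ /eqP e2 /existsP [x /andP [xe /existsP [y /andP [ye /andP [xy axy]]]]]].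
have ee : e = [set x; y].
  apply/eqP; rewrite eq_sym eqEcard e2 cards2 xy andbT.
  by apply/subsetP => u; rewrite !inE => /orP [] /eqP ->.
have xZ := subsetP eZ x xe; have yZ := subsetP eZ y ye.
rewrite sum1_card.
have -> : 2 = #|[set (x, y); (y, x)]|.
  by rewrite cards2; case: eqP => // [[]] /eqP; rewrite (negbTE xy).
apply: subset_leq_card; apply/subsetP => p; rewrite !inE => /orP [] /eqP -> /=.
  by rewrite unfold_in /= !inE /= xZ yZ xy axy ee eqxx.
by rewrite unfold_in /= !inE /= xZ yZ eq_sym xy orbC axy ee setUC eqxx.
Qed.

Lemma cnt_disj (V : finType) (Q1 Q2 Q3 : pred (V * V)) (X Y : {set V}) :
  (forall p, Q1 p -> Q2 p -> False) -> (forall p, Q1 p || Q2 p -> Q3 p) ->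
  cnt Q1 X Y + cnt Q2 X Y <= cnt Q3 X Y.
Proof.
move=> d12 s3; rewrite /cnt -cardsUI.
have -> : [set p in setX X Y | Q1 p] :&: [set p in setX X Y | Q2 p] = set0.
  apply/setP => p; rewrite !inE; apply/negP => /andP [/andP [_ h1] /andP [_ h2]].
  exact: d12 h1 h2.
rewrite cards0 addn0; apply: subset_leq_card; apply/subsetP => p; rewrite !inE.
by move=> /orP [] /andP [-> h] /=; apply: s3; rewrite h ?orbT.
Qed.

Lemma cnt_diag (V : finType) (Z : {set V}) : #|Z| <= cnt (fun p => p.1 == p.2) Z Z.
Proof.
rewrite /cnt -(card_imset Z (f := fun x : V => (x, x))); last by move=> x y [].
apply: subset_leq_card; apply/subsetP => p /imsetP [x xZ ->]; by rewrite !inE /= xZ eqxx.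
Qed.

Lemma cnt_all (V : finType) (X Y : {set V}) : cnt predT X Y = #|X| * #|Y|.
Proof. by rewrite /cnt -cardsX; apply: eq_card => p; rewrite !inE andbT. Qed.

Lemma bin2_double n : 'C(n, 2) * 2 = n * n.-1.
Proof.
elim: n => [|n IH] //; rewrite binS bin1 mulnDl IH; case: n {IH} => [|n] //=; lia.
Qed.

Definition Fst (V : finType) k l (v : V) (B D : {set V}) (x : starV k l) : {set V} :=
  match x with None => [set v] | Some (inl _) => B | Some (inr _) => D end.

Definition Qg (V : finType) (arc : rel V) (p : V * V) :=
  (p.1 != p.2) && ~~ (arc p.1 p.2 || arc p.2 p.1).

Lemma valid (V : finType) (arc : rel V) k l (Z : {set V}) (v : V)
  (phi : {ffun starV k l -> V}) :
  [&& phi None == v, star_iso arc phi & [forall x : ('I_k + 'I_l)%type, phi (Some x) \in Z]] ->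
  (forall x, phi x \in Fst v (Z :\: [set y in Z | arc y v]) [set y in Z | arc y v] x) /\
  (forall s t, s != t -> Qg arc (phi (Some s), phi (Some t))).
Proof.
move=> /and3P [/eqP pv /andP [/injectiveP inj /forallP H] /forallP HZ]; split.
  case => [[o|i]|] /=; last by rewrite inE pv.
    have := forallP (H (Some (inl o))) None; rewrite /= pv => /eqP h.
    by rewrite !inE HZ -h.
  have := forallP (H (Some (inr i))) None; rewrite /= pv => /eqP h.
  by rewrite !inE HZ -h.
move=> s t st; rewrite /Qg /=.
have -> : phi (Some s) != phi (Some t).
  by apply/negP => /eqP /inj [] /eqP; rewrite (negbTE st).
have a1 := forallP (H (Some s)) (Some t); have a2 := forallP (H (Some t)) (Some s).
by move: a1 a2; case: s {st} => ?; case: t => ? /= /eqP <- /eqP <-.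
Qed.

Lemma nat_main (V : finType) (arc : rel V) k l (Z : {set V}) (v : V) :
  (2 <= l)%N -> (l <= k)%N ->
  forall D B C E, D = [set y in Z | arc y v] -> B = Z :\: D ->
  C = #|[set phi : {ffun starV k l -> V} |
       [&& phi None == v, star_iso arc phi &
           [forall x : ('I_k + 'I_l)%type, phi (Some x) \in Z]]]| ->
  E = #|[set e : {set V} | [&& e \subset Z, #|e| == 2 &
        [exists x in e, exists y in e, (x != y) && (arc x y || arc y x)]]]| ->
  C * 'C(#|Z|, 2) + E * (#|B| ^ k * #|D| ^ l) <= 'C(#|Z|, 2) * (#|B| ^ k * #|D| ^ l).
Proof.
move=> hl hlk D0 B0 C0 E0 -> -> -> ->.
set D := [set y in Z | arc y v]; set B := Z :\: D.
set E := #|[set e : {set V} | _]|.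
have hk : (2 <= k)%N by apply: leq_trans hlk.
set S := [set phi : {ffun starV k l -> V} | _].
set T := (#|B| ^ k * #|D| ^ l)%N.
pose F := Fst (k:=k) (l:=l) v B D.
have prodF : \prod_x #|F x| = T.
  rewrite big_opt big_sumType /= cards1 mul1n !prod_nat_const !card_ord.
  by [].
have key : forall s t, s != t ->
    #|S| * (#|F (Some s)| * #|F (Some t)|) <= cnt (Qg arc) (F (Some s)) (F (Some t)) * T.
  move=> s t st.
  have st' : Some s != Some t :> starV k l by apply: contra st => /eqP [] ->.
  rewrite -prodF /cnt -(@card_fam_pair _ _ F _ _ [set p in setX (F (Some s)) (F (Some t)) | Qg arc p] st'); last first.
    by apply/subsetP => p; rewrite !inE => /andP [].
  rewrite leq_mul2r; apply/orP; right; apply: subset_leq_card; apply/subsetP => phi.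
  rewrite !inE => Hp; have [H1 H2] := valid Hp.
  apply/andP; split; first by apply/forallP.
  by apply/andP; split; [apply/andP; split; exact: H1 | exact: H2].
have o0 : (0 < k)%N by lia. have o1 : (1 < k)%N by lia.
have i0 : (0 < l)%N by lia. have i1 : (1 < l)%N by lia.
have h1 := key (inl (Ordinal o0)) (inl (Ordinal o1)) isT.
have h2 := key (inr (Ordinal i0)) (inr (Ordinal i1)) isT.
have h3 := key (inl (Ordinal o0)) (inr (Ordinal i0)) isT.
have h4 := key (inr (Ordinal i0)) (inl (Ordinal o0)) isT.
rewrite /= in h1 h2 h3 h4.
have ZBD : B :|: D = Z.
  apply/setP => x; rewrite !inE; by case: (x \in Z); case: (arc x v).
have disBD : [disjoint B & D].
  by rewrite -setI_eq0; apply/eqP/setP => x; rewrite !inE; case: (arc x v); case: (x \in Z).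
have zbd : #|Z| = #|B| + #|D| by rewrite -ZBD cardsU (_ : B :&: D = set0) ?cards0 ?subn0 // ; apply/eqP; rewrite setI_eq0.
have hG : cnt (Qg arc) Z Z = cnt (Qg arc) B B + cnt (Qg arc) B D + cnt (Qg arc) D B + cnt (Qg arc) D D.
  by rewrite -ZBD cntUl // !cntUr // addnA.
have hsplit : cnt (Qg arc) Z Z + (#|Z| + 2 * E) <= #|Z| * #|Z|.
  have he := edges2 arc Z.
  have hd := cnt_diag Z.
  have := @cnt_disj V (fun p => p.1 == p.2) (fun p => (p.1 != p.2) && (arc p.1 p.2 || arc p.2 p.1)) (predC (Qg arc)) Z Z.
  have := @cnt_disj V (Qg arc) (predC (Qg arc)) predT Z Z.
  rewrite cnt_all.
  move=> c1 c2.
  have c1' := c1 (fun p h1 h2 => ltac:(by rewrite /= h1 in h2)) (fun _ _ => isT).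
  have c2' : cnt (fun p => p.1 == p.2) Z Z + cnt (fun p => (p.1 != p.2) && (arc p.1 p.2 || arc p.2 p.1)) Z Z <= cnt (predC (Qg arc)) Z Z.
    apply: c2.
      by move=> p /= ->.
    by move=> p /=; rewrite /Qg; case: (p.1 == p.2); case: (arc _ _ || arc _ _).
  lia.
have hC : #|S| * (#|Z| * #|Z|) <= cnt (Qg arc) Z Z * T.
  rewrite hG zbd !mulnDl !mulnDr.
  rewrite !addnA; apply: leq_add => //; apply: leq_add => //; apply: leq_add => //.
have hb := bin2_double #|Z|.
have e1 : #|S| * (#|Z| * #|Z|.-1) <= #|S| * (#|Z| * #|Z|).
  by rewrite leq_mul2l leq_mul2l leq_pred !orbT.
have e2 : cnt (Qg arc) Z Z + 2 * E <= #|Z| * #|Z|.-1.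
  rewrite -subn1 mulnBr muln1; move: hsplit; lia.
rewrite -(leq_pmul2r (isT : (0 < 2)%N)).
have -> : (#|S| * 'C(#|Z|, 2) + E * T) * 2 = #|S| * (#|Z| * #|Z|.-1) + 2 * E * T.
  by rewrite -hb; ring.
have -> : 'C(#|Z|, 2) * T * 2 = (#|Z| * #|Z|.-1) * T by rewrite -hb; ring.
apply: leq_trans (_ : #|S| * (#|Z| * #|Z|) + 2 * E * T <= _).
  by rewrite leq_add2r.
apply: leq_trans (_ : (cnt (Qg arc) Z Z + 2 * E) * T <= _).
  by rewrite mulnDl leq_add2r.
by rewrite leq_mul2r e2 orbT.
Qed.

Lemma den_card (V : finType) k l (v : V) :
  #|[set phi : {ffun starV k l -> V} | phi None == v]| = (#|V| ^ (k + l))%N.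
Proof.
have -> : [set phi : {ffun starV k l -> V} | phi None == v] =
    [set f : {ffun starV k l -> V} | [forall x, f x \in Fst v setT setT x]].
  apply/setP => f; rewrite !inE; apply/idP/forallP => [/eqP fv [[o|i]|] | H] /=.
  - by rewrite inE.
  - by rewrite inE.
  - by rewrite inE fv.
  by have := H None; rewrite /= inE.
rewrite card_fam big_opt big_sumType /= cards1 mul1n !prod_nat_const !card_ord cardsT.
by rewrite expnD.
Qed.

Lemma E_le (V : finType) (arc : rel V) (Z : {set V}) :
  (#|[set e : {set V} | [&& e \subset Z, #|e| == 2 &
        [exists x in e, exists y in e, (x != y) && (arc x y || arc y x)]]]|
   <= 'C(#|Z|, 2))%N.
Proof.
rewrite -cards_draws; apply: subset_leq_card; apply/subsetP => e; rewrite !inE.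
by case/and3P => -> -> _.
Qed.

Local Open Scope ring_scope.
Lemma prod_const_ord (R : realFieldType) n (c : R) : \prod_(i < n) c = c ^+ n.
Proof. by rewrite prodr_const card_ord. Qed.
Lemma sum_const_ord (R : realFieldType) n (c : R) : \sum_(i < n) c = c *+ n.
Proof. by rewrite sumr_const card_ord. Qed.

Lemma agm2 (R : realFieldType) (k l : nat) (b d : R) :
  (0 < k)%N -> (0 < l)%N -> 0 <= b -> 0 <= d ->
  (b / k%:R) ^+ k * (d / l%:R) ^+ l <= ((b + d) / (k + l)%:R) ^+ (k + l).
Proof.
move=> k0 l0 b0 d0.
pose E (i : ('I_k + 'I_l)%type) : R := match i with inl _ => b / k%:R | inr _ => d / l%:R end.
have H := @leif_AGM R _ predT E.
have cA : #|@predT ('I_k + 'I_l)%type| = (k + l)%N.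
  have -> : (k + l)%N = (#|{: 'I_k}| + #|{: 'I_l}|)%N by rewrite !card_ord.
  exact: card_sum.
have E0 : {in predT, forall i, 0 <= E i}.
  by move=> [i|i] _ /=; apply: divr_ge0 => //; exact: ler0n.
have H2 := (H E0).1.
have P1 : \prod_(i in predT) E i = (b / k%:R) ^+ k * (d / l%:R) ^+ l.
  rewrite (eq_bigl xpredT) // big_sumType /=. rewrite prod_const_ord. rewrite prod_const_ord. reflexivity.
have S1 : \sum_(i in predT) E i = b + d.
  rewrite (eq_bigl xpredT) // big_sumType /=. rewrite sum_const_ord. rewrite sum_const_ord.
  have kn : k%:R != 0 :> R by rewrite pnatr_eq0 -lt0n.
  have ln : l%:R != 0 :> R by rewrite pnatr_eq0 -lt0n.
  rewrite -[b / k%:R *+ k]mulr_natr -[d / l%:R *+ l]mulr_natr. rewrite divfK //. rewrite divfK //.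
rewrite P1 S1 cA in H2. exact: H2.
Qed.

Unset Implicit Arguments.
Theorem lemma4 (R : realFieldType) (k l : nat) (V : finType) (arc : rel V)
  (Z : {set V}) (v : V) :
  (2 <= l)%N -> (l <= k)%N -> (6 <= k + l)%N ->
  irreflexive arc ->
  (2 <= #|Z|)%N -> v \notin Z ->
  cond_prob R arc k l Z v <=
    (1 - delta R arc Z) * (mu R Z - rho_in R arc Z v) ^+ k
      * (rho_in R arc Z v) ^+ l
  /\
  (1 - delta R arc Z) * (mu R Z - rho_in R arc Z v) ^+ k
      * (rho_in R arc Z v) ^+ l
    <= (1 - delta R arc Z) * lambda0 R k l * (mu R Z) ^+ (k + l).
Proof.
move=> hl hlk hm irr hZ vZ.
have hnat := @nat_main V arc k l Z v hl hlk _ _ _ _ erefl erefl erefl erefl.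
have hE := E_le arc Z.
rewrite /cond_prob /delta /mu /rho_in /lambda0 den_card.
set D := [set y in Z | arc y v] in hnat *.
set B := Z :\: D in hnat *.
set E := #|[set e : {set V} | _]| in hnat hE *.
set C := #|[set phi : {ffun starV k l -> V} | _]| in hnat *.
set c2 := 'C(#|Z|, 2) in hnat hE *.
have DZ : D \subset Z by apply/subsetP => x; rewrite inE => /andP [].
have zbd : #|Z| = (#|B| + #|D|)%N.
  by rewrite cardsD (setIidPr DZ) subnK // subset_leq_card.
have n0 : (0 < #|V|)%N by apply/card_gt0P; exists v.
have c20 : (0 < c2)%N by rewrite bin_gt0.
have nR : #|V|%:R != 0 :> R by rewrite pnatr_eq0 -lt0n.
have cR : c2%:R != 0 :> R by rewrite pnatr_eq0 -lt0n.
have k0 : (0 < k)%N by lia. have l0 : (0 < l)%N by lia.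
have kR : k%:R != 0 :> R by rewrite pnatr_eq0 -lt0n.
have lR : l%:R != 0 :> R by rewrite pnatr_eq0 -lt0n.
have mR : (k + l)%:R != 0 :> R by rewrite pnatr_eq0 -lt0n addn_gt0 k0.
have nk : #|V|%:R ^+ k != 0 :> R by rewrite expf_neq0.
have nl : #|V|%:R ^+ l != 0 :> R by rewrite expf_neq0.
have eqB : #|Z|%:R / #|V|%:R - #|D|%:R / #|V|%:R = #|B|%:R / #|V|%:R :> R.
  by rewrite zbd natrD; field.
rewrite eqB !expr_div_n.
have d1 : 0 <= 1 - E%:R / c2%:R :> R.
  rewrite subr_ge0 ler_pdivrMr ?ltr0n // mul1r ler_nat //.
split.
  have -> : (1 - E%:R / c2%:R) * (#|B|%:R ^+ k / #|V|%:R ^+ k) * (#|D|%:R ^+ l / #|V|%:R ^+ l)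
      = ((c2 - E) * (#|B| ^ k * #|D| ^ l))%N%:R / (c2 * #|V| ^ (k + l))%N%:R :> R.
    rewrite natrM natrB // !natrM !natrX exprD; field.
    by rewrite cR nk nl.
  have -> : C%:R / (#|V| ^ (k + l))%N%:R = (C * c2)%N%:R / (c2 * #|V| ^ (k + l))%N%:R :> R.
    rewrite !natrM natrX exprD; field.
    by rewrite cR nk nl.
  rewrite ler_pM2r ?invr_gt0 ?ltr0n ?muln_gt0 ?c20 ?expn_gt0 ?n0 // ler_nat.
  by rewrite mulnBl leq_subRL ?leq_mul ?hE // addnC.
rewrite -!mulrA; apply: ler_wpM2l => //.
have A := agm2 (R := R) (b := #|B|%:R) (d := #|D|%:R) k0 l0 (ler0n _ _) (ler0n _ _).
have P0 : 0 <= k%:R ^+ k * l%:R ^+ l / #|V|%:R ^+ (k + l) :> R.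
  by apply: divr_ge0; [apply: mulr_ge0; apply: exprn_ge0 | apply: exprn_ge0]; exact: ler0n.
have := ler_wpM2l P0 A.
rewrite !expr_div_n -natrD -zbd exprD.
have -> : k%:R ^+ k * l%:R ^+ l / (#|V|%:R ^+ k * #|V|%:R ^+ l) *
    (#|B|%:R ^+ k / k%:R ^+ k * (#|D|%:R ^+ l / l%:R ^+ l))
    = #|B|%:R ^+ k / #|V|%:R ^+ k * (#|D|%:R ^+ l / #|V|%:R ^+ l) :> R.
  field. by rewrite nk nl !expf_neq0.
have -> : k%:R ^+ k * l%:R ^+ l / (#|V|%:R ^+ k * #|V|%:R ^+ l) *
    (#|Z|%:R ^+ (k + l) / (k + l)%:R ^+ (k + l))
    = k%:R ^+ k * l%:R ^+ l / (k + l)%:R ^+ (k + l) *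
      (#|Z|%:R ^+ (k + l) / (#|V|%:R ^+ k * #|V|%:R ^+ l)) :> R.
  field. by rewrite nk nl !expf_neq0.
by move=> H; rewrite !mulrA in H *.
Qed.
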